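(* Let $S\subsetneq\mathbb{S}$ (possibly empty) and for $q\in(0,1)$ write $v_i(q)=V(qe^{\theta_i-1})$ for $i\in S$. Define $$F_S(q)=-\log q+\sum_{i\in S}\frac{v_i(q)}{1-v_i(q)}+\frac{1-q-\sum_{i\in S}v_i(q)}{q+\sum_{i\in S}v_i(q)}.$$ Then $F_S$ is strictly decreasing on $(0,\bar q_0(S)]$.
   Context: Sellers $\mathbb{S}=\{1,\dots,n\}$ with product qualities $\theta_i\ge0$. $V:(0,\infty)\to(0,1)$ is defined by $V(x)=$ the unique $v\in(0,1)$ with $v\exp(v/(1-v))=x$. For nonempty $S\subseteq\mathbb{S}$, $\bar q_0(S)\in(0,1)$ is the unique solution of $\sum_{i\in S}V(\bar q_0e^{\theta_i-1})=1-\bar q_0$; $\bar q_0(\emptyset)=1$. (For $j\notin S$, $F_S(\bar q_0(S\cup\{j\}))$ equals the Bertrand equilibrium social welfare when $S\cup\{j\}$ is displayed, and $F_S(\bar q_0(S))$ equals that when $S$ is displayed.) *)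

(* Defs.v *)
From Stdlib Require Import Reals Lra List ClassicalEpsilon.
Open Scope R_scope.

Definition V (x : R) : R :=
  epsilon (inhabits 0) (fun v => 0 < v < 1 /\ v * exp (v / (1 - v)) = x).

(* Sum over a finite set of sellers represented as a duplicate-free list. *)
Definition sumS (S : list nat) (f : nat -> R) : R :=
  fold_right Rplus 0 (map f S).

Definition vi (theta : nat -> R) (i : nat) (q : R) : R :=
  V (q * exp (theta i - 1)).

Definition qbar0 (theta : nat -> R) (S : list nat) : R :=
  match S with
  | nil => 1
  | _ => epsilon (inhabits 0)
           (fun q => 0 < q < 1 /\ sumS S (fun i => vi theta i q) = 1 - q)
  end.

Definition F (theta : nat -> R) (S : list nat) (q : R) : R :=
  - ln q
  + sumS S (fun i => vi theta i q / (1 - vi theta i q))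
  + (1 - q - sumS S (fun i => vi theta i q))
    / (q + sumS S (fun i => vi theta i q)).

(* Main.v *)
Require Import Defs.
From Stdlib Require Import Reals Lra Psatz List ClassicalEpsilon.
From Coquelicot Require Import Coquelicot.
Open Scope R_scope.

Definition W (v : R) : R := v * exp (v / (1 - v)).
Definition dW (v : R) : R := exp (v / (1 - v)) * (1 + v / ((1 - v) * (1 - v))).

Lemma deriv_cont f x l : is_derive f x l -> continuity_pt f x.
Proof. intros H. apply derivable_continuous_pt. exists l. apply is_derive_Reals; auto. Qed.

Lemma W_deriv v : v < 1 -> is_derive W v (dW v).
Proof.
  intros Hv. unfold W, dW. auto_derive.
  - lra.
  - unfold Rminus, Rdiv. field. lra.
Qed.

Lemma dW_pos v : 0 < v < 1 -> 0 < dW v.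
Proof.
  intros Hv. unfold dW. apply Rmult_lt_0_compat. apply exp_pos.
  assert (0 < (1-v)*(1-v)) by nra.
  assert (0 < v / ((1 - v) * (1 - v))) by (apply Rdiv_lt_0_compat; lra). lra.
Qed.

Lemma W_incr a b : 0 < a -> a < b -> b < 1 -> W a < W b.
Proof.
  intros. unfold W.
  assert (a / (1-a) < b / (1-b)).
  { apply (Rmult_lt_reg_r ((1-a)*(1-b))). nra.
    replace (a / (1 - a) * ((1 - a) * (1 - b))) with (a*(1-b)) by (field; lra).
    replace (b / (1 - b) * ((1 - a) * (1 - b))) with (b*(1-a)) by (field; lra). nra. }
  assert (exp (a/(1-a)) < exp (b/(1-b))) by (apply exp_increasing; auto).
  assert (0 < exp (a/(1-a))) by apply exp_pos. nra.
Qed.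

Lemma W_ge v : 0 < v < 1 -> v <= W v.
Proof.
  intros. unfold W. assert (0 <= v/(1-v)) by (apply Rdiv_le_0_compat; lra).
  assert (1 <= exp (v/(1-v))).
  { destruct (Req_dec (v/(1-v)) 0) as [E|E]. rewrite E, exp_0; lra.
    pose proof (exp_ineq1 (v/(1-v))). lra. }
  nra.
Qed.

Lemma W_pos v : 0 < v < 1 -> 0 < W v.
Proof. intros. pose proof (W_ge v H). lra. Qed.

Lemma W_exists x : 0 < x -> exists v, 0 < v < 1 /\ W v = x.
Proof.
  intros Hx.
  set (a := Rmin (1/2) (x/4)). set (b := (x+1)/(x+2)).
  assert (Ha : 0 < a <= 1/2).
  { unfold a. split. apply Rmin_glb_lt; lra. apply Rmin_l. }
  assert (Ha2 : a <= x/4) by apply Rmin_r.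
  assert (Hb : 1/2 < b < 1).
  { unfold b. split. apply (Rmult_lt_reg_r (x+2)); [lra|]. field_simplify; lra.
    apply (Rmult_lt_reg_r (x+2)); [lra|]. field_simplify; lra. }
  assert (Wa : W a < x).
  { unfold W. assert (a/(1-a) <= 1).
    { apply (Rmult_le_reg_r (1-a)); [lra|]. field_simplify; lra. }
    assert (exp (a/(1-a)) <= exp 1).
    { destruct (Req_dec (a/(1-a)) 1) as [E|E]. rewrite E; lra. left; apply exp_increasing; lra. }
    pose proof exp_le_3.
    assert (a * exp (a/(1-a)) <= a * 3) by (apply Rmult_le_compat_l; lra). lra. }
  assert (Wb : x < W b).
  { unfold W. assert (E : b/(1-b) = x+1) by (unfold b; field; lra).
    rewrite E. pose proof (exp_ineq1 (x+1) ltac:(lra)).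
    assert (x + 1 = b * (1 + (x+1))) by (unfold b; field; lra).
    assert (b * (1 + (x+1)) < b * exp (x+1)) by (apply Rmult_lt_compat_l; lra). lra. }
  assert (Hab : a < b) by lra.
  destruct (Ranalysis5.IVT_interv (fun v => W v - x) a b) as [z [Hz Ez]]; auto.
  - intros y Hy. apply continuity_pt_minus. apply (deriv_cont _ _ _ (W_deriv y ltac:(lra))).
    apply continuity_pt_const. intros u w; auto.
  - lra. - lra.
  - exists z. split. lra. lra.
Qed.

Lemma V_spec x : 0 < x -> 0 < V x < 1 /\ W (V x) = x.
Proof.
  intros Hx. unfold V. apply epsilon_spec. apply W_exists; auto.
Qed.

Lemma W_inj u v : 0 < u < 1 -> 0 < v < 1 -> W u = W v -> u = v.
Proof.
  intros. destruct (Rtotal_order u v) as [H2|[H2|H2]]; auto.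
  pose proof (W_incr u v ltac:(lra) H2 ltac:(lra)); lra.
  pose proof (W_incr v u ltac:(lra) H2 ltac:(lra)); lra.
Qed.

Lemma V_W v : 0 < v < 1 -> V (W v) = v.
Proof.
  intros. pose proof (W_pos v H). destruct (V_spec (W v) H0). apply W_inj; auto.
Qed.

Lemma V_incr x y : 0 < x -> x < y -> V x < V y.
Proof.
  intros. destruct (V_spec x) as [A B]; auto. destruct (V_spec y) as [C D]; try lra.
  destruct (Rtotal_order (V x) (V y)) as [H2|[H2|H2]]; auto.
  rewrite <- H2 in D. lra.
  pose proof (W_incr (V y) (V x) ltac:(lra) H2 ltac:(lra)); lra.
Qed.

Lemma V_le x : 0 < x -> V x <= x.
Proof. intros. destruct (V_spec x H). pose proof (W_ge (V x) H0). lra. Qed.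

Lemma V_le_mono x y : 0 < x -> x <= y -> V x <= V y.
Proof. intros. destruct (Req_dec x y). subst; lra. left; apply V_incr; lra. Qed.

Lemma V_cont x : 0 < x -> continuity_pt V x.
Proof.
  intros Hx.
  destruct (V_spec (x/2)) as [A1 A2]; [lra|].
  destruct (V_spec (2*x)) as [B1 B2]; [lra|].
  apply (Ranalysis5.continuity_pt_recip_interv W V (V (x/2)) (V (2*x))).
  - apply V_incr; lra.
  - intros u w H1 H2 H3. apply W_incr; lra.
  - intros y H1 H2. rewrite A2 in H1. unfold comp, id. apply V_spec. lra.
  - intros y H1 H2. rewrite A2 in H1. rewrite B2 in H2. split; apply V_le_mono; lra.
  - intros a Ha. apply (deriv_cont _ _ _ (W_deriv a ltac:(lra))).
  - rewrite A2, B2. lra.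
Qed.

Lemma V_deriv x : 0 < x -> is_derive V x (1 / dW (V x)).
Proof.
  intros Hx. apply is_derive_Reals.
  destruct (V_spec (x/2)) as [A1 A2]; [lra|].
  destruct (V_spec (2*x)) as [B1 B2]; [lra|].
  destruct (V_spec x) as [C1 C2]; [lra|].
  assert (Prf : forall a, V (x/2) <= a <= V (2*x) -> derivable_pt W a).
  { intros a Ha. exists (dW a). apply is_derive_Reals. apply W_deriv. lra. }
  assert (Prg_incr : V (x/2) <= V x <= V (2*x)) by (split; apply V_le_mono; lra).
  assert (E : derive_pt W (V x) (Prf (V x) Prg_incr) = dW (V x)).
  { apply derive_pt_eq_0. apply is_derive_Reals. apply W_deriv. lra. }
  rewrite <- E.
  apply (Ranalysis5.derivable_pt_lim_recip_interv W V (x/2) (2*x) x Prf (V_cont x Hx)); try lra.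
  - intros y Hy. unfold comp, id. apply V_spec. lra.
  - rewrite E. pose proof (dW_pos (V x) C1). lra.
Qed.

Lemma gen_deriv (h s : R -> R) q dh ds : 0 < q -> 0 < q + s q -> is_derive h q dh -> is_derive s q ds ->
 is_derive (fun q => - ln q + h q + (1 - q - s q) / (q + s q)) q
   (- / q + dh - (1 + ds) / ((q + s q) * (q + s q))).
Proof.
  intros. auto_derive.
  - repeat split; auto. exists dh; auto. exists ds; auto. exists ds; auto. lra.
  - replace (Derive (fun x => h x) q) with dh by (symmetry; apply is_derive_unique; auto).
    replace (Derive (fun x => s x) q) with ds by (symmetry; apply is_derive_unique; auto).
    field. lra.
Qed.

Lemma sumS_cons i l f : sumS (i :: l) f = f i + sumS l f.
Proof. reflexivity. Qed.

Lemma sumS_nil f : sumS nil f = 0.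
Proof. reflexivity. Qed.

Lemma sumS_ext l f g : (forall i, In i l -> f i = g i) -> sumS l f = sumS l g.
Proof.
  induction l; intros H; simpl. auto. unfold sumS in *; simpl.
  rewrite H by (left; auto). rewrite IHl; auto. intros; apply H; right; auto.
Qed.

Lemma sumS_plus l f g : sumS l (fun i => f i + g i) = sumS l f + sumS l g.
Proof. induction l; rewrite ?sumS_nil, ?sumS_cons. lra. rewrite IHl; lra. Qed.

Lemma sumS_div l f c : sumS l (fun i => f i / c) = sumS l f / c.
Proof. induction l; rewrite ?sumS_nil, ?sumS_cons. unfold Rdiv; lra. rewrite IHl. unfold Rdiv; lra. Qed.

Lemma sumS_le l f g : (forall i, In i l -> f i <= g i) -> sumS l f <= sumS l g.
Proof.
  induction l; intros H; rewrite ?sumS_nil, ?sumS_cons. lra.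
  pose proof (H a (or_introl eq_refl)). assert (sumS l f <= sumS l g) by (apply IHl; intros; apply H; right; auto). lra.
Qed.

Lemma sumS_nonneg l f : (forall i, In i l -> 0 <= f i) -> 0 <= sumS l f.
Proof.
  induction l; intros H; rewrite ?sumS_nil, ?sumS_cons. lra.
  pose proof (H a (or_introl eq_refl)). assert (0 <= sumS l f) by (apply IHl; intros; apply H; right; auto). lra.
Qed.

Lemma sumS_deriv l (f : nat -> R -> R) df x :
  (forall i, In i l -> is_derive (fun q => f i q) x (df i)) ->
  is_derive (fun q => sumS l (fun i => f i q)) x (sumS l df).
Proof.
  induction l; intros H.
  - unfold sumS; simpl. auto_derive; auto.
  - rewrite sumS_cons. 
    apply (is_derive_ext (fun q => f a q + sumS l (fun i => f i q))).
    { intros; rewrite sumS_cons; auto. }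
    apply (is_derive_plus (fun q => f a q) (fun q => sumS l (fun i => f i q))). apply H; left; auto. apply IHl. intros; apply H; right; auto.
Qed.

Definition cc (theta : nat -> R) i := exp (theta i - 1).

Lemma vi_spec theta i q : 0 < q -> 0 < vi theta i q < 1 /\ W (vi theta i q) = q * cc theta i.
Proof. intros. unfold vi, cc. apply V_spec. apply Rmult_lt_0_compat; auto; apply exp_pos. Qed.

Lemma vi_deriv theta i q : 0 < q ->
  is_derive (fun q => vi theta i q) q (cc theta i * (1 / dW (vi theta i q))).
Proof.
  intros Hq. unfold vi.
  assert (Hc : 0 < cc theta i) by apply exp_pos.
  apply (is_derive_comp V (fun q => q * exp (theta i - 1)) q).
  apply V_deriv. apply Rmult_lt_0_compat; auto; apply exp_pos.
  fold (cc theta i). auto_derive; auto. ring.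
Qed.

Lemma vi_deriv_val theta i q : 0 < q ->
  cc theta i * (1 / dW (vi theta i q)) =
  (vi theta i q * ((1 - vi theta i q) * (1 - vi theta i q)) /
    ((1 - vi theta i q) * (1 - vi theta i q) + vi theta i q)) / q.
Proof.
  intros Hq. destruct (vi_spec theta i q Hq) as [Hv HW].
  set (v := vi theta i q) in *. unfold W in HW. unfold dW.
  assert (E : cc theta i = v * exp (v / (1 - v)) / q) by (rewrite HW; field; lra).
  rewrite E. pose proof (exp_pos (v/(1-v))).
  assert (0 < (1-v)*(1-v)) by nra.
  field. repeat split; try lra.
Qed.

Lemma gen_deriv2 (u : R -> R) q du : u q < 1 -> is_derive u q du ->
  is_derive (fun q => u q / (1 - u q)) q (du / ((1 - u q) * (1 - u q))).
Proof.
  intros. auto_derive.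
  - repeat split; auto; try (exists du; auto). lra.
  - replace (Derive (fun x => u x) q) with du by (symmetry; apply is_derive_unique; auto).
    field. lra.
Qed.

Definition dv theta i q := cc theta i * (1 / dW (vi theta i q)).

Definition Fd theta S q :=
  - / q + sumS S (fun i => dv theta i q / ((1 - vi theta i q) * (1 - vi theta i q)))
  - (1 + sumS S (fun i => dv theta i q)) /
    ((q + sumS S (fun i => vi theta i q)) * (q + sumS S (fun i => vi theta i q))).

Lemma F_deriv theta S q : 0 < q -> is_derive (F theta S) q (Fd theta S q).
Proof.
  intros Hq. unfold F, Fd.
  apply (gen_deriv (fun q => sumS S (fun i => vi theta i q / (1 - vi theta i q)))
                   (fun q => sumS S (fun i => vi theta i q))).
  - auto.
  - assert (0 <= sumS S (fun i => vi theta i q)).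
    { apply sumS_nonneg. intros. destruct (vi_spec theta i q Hq). lra. }
    lra.
  - apply (sumS_deriv S (fun i q => vi theta i q / (1 - vi theta i q))). intros i _.
    apply gen_deriv2. destruct (vi_spec theta i q Hq); lra. apply vi_deriv; auto.
  - apply (sumS_deriv S (fun i q => vi theta i q)). intros i _. apply vi_deriv; auto.
Qed.

Definition phi (v : R) := v * v * (2 - v) / ((1 - v) * (1 - v) + v).
Definition aa (v : R) := v * ((1 - v) * (1 - v)) / ((1 - v) * (1 - v) + v).

Lemma Dpos v : 0 <= v <= 1 -> 0 < (1 - v) * (1 - v) + v.
Proof. intros. nra. Qed.

Lemma superadd a b : 0 <= a -> 0 <= b -> a + b <= 1 -> phi a + phi b <= phi (a + b).
Proof.
  intros. unfold phi.
  pose proof (Dpos a ltac:(lra)). pose proof (Dpos b ltac:(lra)). pose proof (Dpos (a+b) ltac:(lra)).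
  set (Da := (1 - a) * (1 - a) + a) in *. set (Db := (1 - b) * (1 - b) + b) in *.
  set (Dab := (1 - (a+b)) * (1 - (a+b)) + (a+b)) in *.
  assert (E : (a+b)*(a+b)*(2-(a+b))/Dab - a*a*(2-a)/Da - b*b*(2-b)/Db
     = a*b*(1-a-b)*(b*b - b + 4 + (b*b-1)*a + (1+b)*a*a) / (Da*Db*Dab)).
  { unfold Da, Db, Dab. field. unfold Da, Db, Dab in *. repeat split; lra. }
  assert (0 <= a*b*(1-a-b)*(b*b - b + 4 + (b*b-1)*a + (1+b)*a*a) / (Da*Db*Dab)).
  { apply Rdiv_le_0_compat. 2: { apply Rmult_lt_0_compat; [apply Rmult_lt_0_compat|]; lra. }
    apply Rmult_le_pos. apply Rmult_le_pos. apply Rmult_le_pos; lra. lra.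
    assert (0 <= a*a) by nra. assert (0 <= (b*b-1)*a + 1) by nra. nra. }
  lra.
Qed.

Lemma phi_le1 s : 0 <= s <= 1 -> phi s <= 1.
Proof.
  intros. unfold phi. pose proof (Dpos s H).
  apply (Rmult_le_reg_r ((1 - s) * (1 - s) + s)); auto.
  unfold Rdiv. rewrite Rmult_assoc, Rinv_l by lra.
  assert (0 <= (1-s)*(1-s)*(1+s)) by (apply Rmult_le_pos; nra). nra.
Qed.

Lemma sum_phi l f : (forall i, In i l -> 0 <= f i) -> sumS l f <= 1 ->
  sumS l (fun i => phi (f i)) <= phi (sumS l f).
Proof.
  induction l; intros H1 H2; rewrite ?sumS_nil, ?sumS_cons in *.
  - unfold phi. rewrite !Rmult_0_l. unfold Rdiv; rewrite Rmult_0_l; lra.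
  - pose proof (H1 a (or_introl eq_refl)).
    assert (0 <= sumS l f) by (apply sumS_nonneg; intros; apply H1; right; auto).
    assert (sumS l (fun i => phi (f i)) <= phi (sumS l f)) by (apply IHl; [intros; apply H1; right; auto | lra]).
    pose proof (superadd (f a) (sumS l f) H H0 H2). lra.
Qed.

Lemma Fd_neg theta S c : 0 < c -> c + sumS S (fun i => vi theta i c) <= 1 -> Fd theta S c < 0.
Proof.
  intros Hc Ht. unfold Fd.
  assert (Hv : forall i, 0 < vi theta i c < 1) by (intros; apply vi_spec; auto).
  assert (E1 : sumS S (fun i => dv theta i c) = sumS S (fun i => aa (vi theta i c)) / c).
  { rewrite <- sumS_div. apply sumS_ext. intros i _. unfold dv. rewrite vi_deriv_val; auto. }
  assert (E2 : sumS S (fun i => dv theta i c / ((1 - vi theta i c) * (1 - vi theta i c)))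
      = (sumS S (fun i => aa (vi theta i c)) + sumS S (fun i => phi (vi theta i c))) / c).
  { rewrite <- sumS_plus, <- sumS_div. apply sumS_ext. intros i _. unfold dv. rewrite vi_deriv_val; auto.
    unfold aa, phi. specialize (Hv i). set (v := vi theta i c) in *.
    pose proof (Dpos v ltac:(lra)). field. repeat split; lra. }
  rewrite E1, E2.
  set (s := sumS S (fun i => vi theta i c)) in *.
  assert (Hs : 0 <= s) by (apply sumS_nonneg; intros; specialize (Hv i); lra).
  set (A := sumS S (fun i => aa (vi theta i c))).
  set (P := sumS S (fun i => phi (vi theta i c))).
  assert (HA : 0 <= A).
  { apply sumS_nonneg. intros i _. unfold aa. specialize (Hv i).
    apply Rdiv_le_0_compat. apply Rmult_le_pos; nra. apply Dpos; lra. }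
  assert (HP : P <= 1).
  { unfold P. pose proof (sum_phi S (fun i => vi theta i c)) as H.
    assert (sumS S (fun i => phi (vi theta i c)) <= phi s).
    { apply H. intros; specialize (Hv i); lra. change (s <= 1); lra. }
    pose proof (phi_le1 s ltac:(lra)). lra. }
  set (t := c + s) in *. assert (Htd : t = c + s) by reflexivity. clearbody t.
  assert (0 < t) by lra.
  assert (t * t <= 1) by (assert (t*t <= t*1) by (apply Rmult_le_compat_l; lra); lra).
  replace (- / c + (A + P) / c - (1 + A / c) / (t * t)) with
     ((- (t*t) + (A + P) * (t*t) - (c + A)) / (c * (t * t))) by (field; lra).
  apply Rdiv_neg_pos. 2: { apply Rmult_lt_0_compat; nra. }
  assert ((A+P)*(t*t) <= (A+1)*(t*t)) by (apply Rmult_le_compat_r; nra).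
  assert (A * (t*t) <= A) by nra. lra.
Qed.

Lemma s_cont theta S q : 0 < q -> continuity_pt (fun q => sumS S (fun i => vi theta i q)) q.
Proof.
  intros. eapply deriv_cont. apply (sumS_deriv S (fun i q => vi theta i q)). intros. apply vi_deriv; auto.
Qed.

Lemma vi_mono theta i x y : 0 < x -> x <= y -> vi theta i x <= vi theta i y.
Proof.
  intros. unfold vi. assert (0 < exp (theta i - 1)) by apply exp_pos.
  apply V_le_mono. apply Rmult_lt_0_compat; auto. apply Rmult_le_compat_r; lra.
Qed.

Lemma sumS_scal l f k : sumS l (fun j => k * f j) = k * sumS l f.
Proof. induction l; rewrite ?sumS_nil, ?sumS_cons. ring. rewrite IHl; ring. Qed.

Lemma qbar0_exists theta i l :
  exists q, 0 < q < 1 /\ sumS (i :: l) (fun i => vi theta i q) = 1 - q.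
Proof.
  set (S := i :: l).
  set (K := sumS S (cc theta)).
  assert (HK : 0 <= K) by (apply sumS_nonneg; intros; unfold cc; left; apply exp_pos).
  set (a := / (2 * (1 + K))).
  assert (Ha : 0 < a <= 1/2).
  { unfold a. split. apply Rinv_0_lt_compat; lra.
    apply (Rmult_le_reg_r (2 * (1+K))); [lra|]. rewrite Rinv_l by lra. nra. }
  assert (Hsa : sumS S (fun j => vi theta j a) <= a * K).
  { unfold K. rewrite <- sumS_scal.
    apply sumS_le. intros j _. unfold vi, cc. apply V_le. apply Rmult_lt_0_compat; [lra|apply exp_pos]. }
  assert (HaK : a * K + a = 1/2).
  { unfold a. field. lra. }
  assert (H1 : 0 < sumS S (fun j => vi theta j 1)).
  { unfold S. rewrite sumS_cons. destruct (vi_spec theta i 1) as [A _]; [lra|].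
    assert (0 <= sumS l (fun j => vi theta j 1)).
    { apply sumS_nonneg. intros. destruct (vi_spec theta i0 1); lra. } lra. }
  destruct (Ranalysis5.IVT_interv (fun q => sumS S (fun j => vi theta j q) + q - 1) a 1) as [z [Hz Ez]].
  - intros y Hy. apply continuity_pt_minus. apply continuity_pt_plus.
    apply s_cont; lra. apply continuity_pt_id. apply continuity_pt_const. intros u w; auto.
  - lra.
  - simpl. lra.
  - simpl. lra.
  - simpl in Ez. exists z. split. split. lra.
    destruct (Req_dec z 1) as [E|E]; [subst z; lra | lra]. lra.
Qed.

Lemma t_le1 theta S c : 0 < c -> c <= qbar0 theta S -> c + sumS S (fun i => vi theta i c) <= 1.
Proof.
  intros Hc Hq. destruct S as [|i l].
  - rewrite sumS_nil. simpl in Hq. lra.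
  - simpl in Hq.
    set (P := fun q => 0 < q < 1 /\ sumS (i :: l) (fun i0 => vi theta i0 q) = 1 - q) in *.
    assert (HP : P (epsilon (inhabits 0) P)) by (apply epsilon_spec; apply qbar0_exists).
    set (Q := epsilon (inhabits 0) P) in *. destruct HP as [HQ1 HQ2].
    assert (sumS (i :: l) (fun j => vi theta j c) <= sumS (i :: l) (fun j => vi theta j Q)).
    { apply sumS_le. intros. apply vi_mono; auto. }
    lra.
Qed.

Theorem lemma3 (n : nat) (theta : nat -> R)
  (Htheta : forall i, In i (seq 1 n) -> 0 <= theta i)
  (S : list nat)
  (HSnd : NoDup S)
  (HSsub : incl S (seq 1 n))
  (HSproper : exists j, In j (seq 1 n) /\ ~ In j S) :
  forall q1 q2, 0 < q1 -> q1 < q2 -> q2 <= qbar0 theta S ->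
    F theta S q2 < F theta S q1.
Proof.
  intros q1 q2 H1 H12 H2.
  destruct (MVT_gen (F theta S) q1 q2 (Fd theta S)) as [c [Hc E]].
  - intros x Hx. rewrite Rmin_left, Rmax_right in Hx by lra. apply F_deriv. lra.
  - intros x Hx. rewrite Rmin_left, Rmax_right in Hx by lra. eapply deriv_cont. apply F_deriv. lra.
  - rewrite Rmin_left, Rmax_right in Hc by lra.
    assert (Fd theta S c < 0) by (apply Fd_neg; [lra | apply t_le1; lra]).
    assert (Fd theta S c * (q2 - q1) < 0).
    { apply Ropp_lt_cancel. rewrite Ropp_0, Ropp_mult_distr_l. apply Rmult_lt_0_compat; lra. }
    lra.
Qed.
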